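(* Let $k \ge 3$ and let $G$ be a connected $k$-regular graph of order $n$ with $G \not\cong K_{k,k}$. If $G$ is not bipartite, then $\gamma_{\rm gr}^t(G) \ge \dfrac{n + \lceil k/2 \rceil - 2}{k-1}$; if $G$ is bipartite, then $\gamma_{\rm gr}^t(G) \ge \dfrac{n + 2\lceil k/2 \rceil - 4}{k-1}$.
   Context: $N(v)$ denotes the open neighborhood of $v$. A sequence $S=(v_1,\ldots,v_k)$ of distinct vertices of a graph $G$ without isolated vertices is a legal sequence if $N(v_i)\setminus \bigcup_{j=1}^{i-1} N(v_j)\neq\emptyset$ for every $i\in\{2,\ldots,k\}$, and a total dominating sequence if moreover $\{v_1,\ldots,v_k\}$ is a total dominating set of $G$. $\gamma_{\rm gr}^t(G)$ is the maximum length of a total dominating sequence of $G$. *)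

(* Defs.v *)
From mathcomp Require Import all_boot all_order all_algebra.
Set Implicit Arguments. Unset Strict Implicit. Unset Printing Implicit Defensive.

Definition simple_graph (T : finType) (e : rel T) : Prop :=
  symmetric e /\ irreflexive e.

Definition nbhd (T : finType) (e : rel T) (v : T) : {set T} := [set u | e v u].

Definition regular (T : finType) (e : rel T) (k : nat) : Prop :=
  forall v : T, #|nbhd e v| = k.

Definition connected (T : finType) (e : rel T) : Prop :=
  forall x y : T, connect e x y.

Definition bipartite (T : finType) (e : rel T) : Prop :=
  exists A : {set T}, forall x y, e x y -> (x \in A) != (y \in A).

Definition isomorphic (T T' : finType) (e : rel T) (e' : rel T') : Prop :=
  exists f : T -> T', bijective f /\ forall x y, e' (f x) (f y) = e x y.

Definition Kkk_rel (k : nat) : rel ('I_k + 'I_k)%type :=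
  fun x y => match x, y with
             | inl _, inr _ | inr _, inl _ => true
             | _, _ => false
             end.

(* legality condition: each vertex after the first has a neighbour not
   already dominated by the union U of neighbourhoods of earlier vertices *)
Fixpoint legal_aux (T : finType) (e : rel T) (U : {set T}) (s : seq T) : bool :=
  match s with
  | [::] => true
  | x :: s' => ~~ (nbhd e x \subset U) && legal_aux e (U :|: nbhd e x) s'
  end.

Definition legal_seq (T : finType) (e : rel T) (s : seq T) : bool :=
  uniq s && match s with
            | [::] => true
            | x :: s' => legal_aux e (nbhd e x) s'
            end.

Definition total_dominating (T : finType) (e : rel T) (S : pred T) : bool :=
  [forall v, [exists u, (u \in S) && e v u]].

Definition total_dominating_seq (T : finType) (e : rel T) (s : seq T) : bool :=
  legal_seq e s && total_dominating e (mem s).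

(* Grundy total domination number: max length of a total dominating sequence
   (such sequences are duplicate-free, hence of length <= #|T|). *)
Definition gamma_gr_t (T : finType) (e : rel T) : nat :=
  \max_(m < #|T|.+1 | [exists t : m.-tuple T, total_dominating_seq e t]) m.

(* Main.v *)
Require Import Defs.
From mathcomp Require Import all_boot all_order all_algebra.
From mathcomp Require Import zify ring lra.
Set Implicit Arguments. Unset Strict Implicit. Unset Printing Implicit Defensive.
Import Order.TTheory GRing.Theory Num.Theory.


Definition twins (T : finType) (e : rel T) (v : T) : {set T} :=
  [set w | nbhd e w == nbhd e v].

Lemma legal_aux_uniq (T : finType) (e : rel T) (t : seq T) (U : {set T}) :
  legal_aux e U t -> all (fun y => ~~ (nbhd e y \subset U)) t && uniq t.
Proof.
elim: t U => [|x t IH] U //= /andP [Hx Ht].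
have /andP [Hall Hu] := IH _ Ht.
rewrite Hx Hu /= andbT.
have Hnin : x \notin t.
  apply/negP => xt; move/allP: Hall => /(_ x xt); by rewrite subsetUr.
rewrite Hnin andbT.
apply/allP => y yt; move/allP: Hall => /(_ y yt).
apply: contra => H; exact: (subset_trans H (subsetUl _ _)).
Qed.

Lemma legal_aux_irr (T : finType) (e : rel T) (D : {set T}) (t : seq T) (U1 U2 : {set T}) :
  (forall x, x \in t -> nbhd e x \subset D) -> U1 :&: D = U2 :&: D ->
  legal_aux e U1 t = legal_aux e U2 t.
Proof.
elim: t U1 U2 => [|x t IH] U1 U2 //= HD HU.
have HxD := HD x (mem_head _ _).
have E : forall U : {set T}, (nbhd e x \subset U) = (nbhd e x \subset U :&: D).
  by move=> U; rewrite subsetI HxD andbT.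
rewrite (E U1) (E U2) HU; congr (_ && _).
apply: IH => [y yt|]; first by apply: HD; rewrite inE yt orbT.
by rewrite !setIUl HU.
Qed.

Lemma legal_aux_cat (T : finType) (e : rel T) (a b : seq T) (U : {set T}) :
  legal_aux e U (a ++ b) =
  legal_aux e U a && legal_aux e (U :|: \bigcup_(x <- a) nbhd e x) b.
Proof.
elim: a U => [|x a IH] U /=; first by rewrite big_nil setU0.
by rewrite IH big_cons setUA andbA.
Qed.

Lemma bigcup_seq_mem (T : finType) (e : rel T) (t : seq T) v :
  v \in \bigcup_(x <- t) nbhd e x -> exists2 x, x \in t & e x v.
Proof.
elim: t => [|x t IH]; first by rewrite big_nil inE.
rewrite big_cons inE => /orP [H|/IH [y yt Hy]].
  by exists x; [rewrite mem_head | move: H; rewrite /nbhd inE].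
by exists y; rewrite // inE yt orbT.
Qed.

Lemma gamma_ge (T : finType) (e : rel T) (s : seq T) :
  total_dominating_seq e s -> size s <= gamma_gr_t e.
Proof.
move=> Hs.
have Hu : uniq s by move: Hs => /andP [/andP [] ].
have Hsz : size s < #|T|.+1 by rewrite ltnS -(card_uniqP Hu) max_card.
rewrite /gamma_gr_t.
have := @leq_bigmax_cond _ (fun m : 'I_#|T|.+1 => [exists t : m.-tuple T, total_dominating_seq e t]) (fun m => nat_of_ord m) (Ordinal Hsz).
apply; apply/existsP; exists (in_tuple s); exact: Hs.
Qed.


Definition setting (T : finType) (e : rel T) (k : nat) (P D : {set T}) : Prop :=
 [/\ symmetric e /\ regular e k, (forall p, p \in P -> nbhd e p \subset D),
    (forall d w, d \in D -> e w d -> w \in P),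
    (forall U : {set T}, U \subset D -> U != set0 -> ~~ (D \subset U) ->
        (exists2 w, w \in P & (nbhd e w :&: U != set0) && ~~ (nbhd e w \subset U)))
  & (forall v, #|twins e v| < k)].

Lemma card_step (T : finType) (e : rel T) k (U : {set T}) w :
  regular e k -> nbhd e w :&: U != set0 -> #|U :|: nbhd e w| + 1 <= #|U| + k.
Proof.
move=> Hr Hne; have := cardsUI U (nbhd e w); rewrite Hr setIC.
have : 0 < #|nbhd e w :&: U| by rewrite card_gt0.
lia.
Qed.

Lemma G1 (T : finType) (e : rel T) k (P D : {set T}) :
  setting e k P D -> forall n (U : {set T}), #|D :\: U| <= n -> U \subset D -> U != set0 ->
  exists t, [/\ legal_aux e U t, {subset t <= P},
     D \subset U :|: (\bigcup_(x <- t) nbhd e x) & #|D| <= #|U| + (k.-1) * size t].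
Proof.
move=> [[Hsym Hr] HPD HDP Hsplit Htw]; elim=> [|n IH] U Hn HUD HU0.
  have HDU : D \subset U by move: Hn; rewrite leqn0 cards_eq0 setD_eq0.
  exists [::]; rewrite big_nil setU0 /=; split => //; by rewrite muln0 addn0 subset_leq_card.
case: (boolP (D \subset U)) => HDU.
  exists [::]; rewrite big_nil setU0 /=; split => //; by rewrite muln0 addn0 subset_leq_card.
have [w wP /andP [Hw1 Hw2]] := Hsplit U HUD HU0 HDU.
have HU'D : U :|: nbhd e w \subset D by rewrite subUset HUD HPD.
have Hn' : #|D :\: (U :|: nbhd e w)| <= n.
  have : #|D :\: (U :|: nbhd e w)| < #|D :\: U|; last by move: Hn; clear; lia.
  apply: proper_card; apply/properP; split; first by rewrite setDUr subsetIl.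
  move/subsetPn: Hw2 => [x xN xU]; exists x; first by rewrite inE xU (subsetP (HPD w wP)).
  by rewrite in_setD in_setU xN orbT.
have HU0' : U :|: nbhd e w != set0.
  by apply: contraNneq HU0 => /eqP; rewrite -subset0 subUset => /andP [? _]; rewrite -subset0.
have [t [Hl Ht Hc Hcard]] := IH _ Hn' HU'D HU0'.
exists (w :: t); split => /=.
- by rewrite Hw2 Hl.
- by move=> x; rewrite inE => /orP [/eqP ->|/Ht].
- by rewrite big_cons setUA.
- have := card_step Hr Hw1; rewrite mulnS.
  move: (k.-1 * size t) Hcard => m Hc1 H; lia.
Qed.

Lemma uphalf_facts k : exists q b, [/\ k = 2 * q + b, b <= 1 & uphalf k = q + b].
Proof.
exists k./2, (odd k); split; last by rewrite uphalf_half addnC.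
  by rewrite -[k in k = _]odd_double_half addnC mul2n.
by case: (odd k).
Qed.

Lemma G2 (T : finType) (e : rel T) k (P D : {set T}) :
  setting e k P D -> (forall y, y \in D -> 2 * #|twins e y| <= k) ->
  forall n (U : {set T}), #|D :\: U| <= n -> U \subset D -> U != set0 -> ~~ (D \subset U) ->
  exists t, [/\ legal_aux e U t, {subset t <= P},
     D \subset U :|: (\bigcup_(x <- t) nbhd e x) & #|D| + uphalf k <= #|U| + (k.-1) * size t + 1].
Proof.
move=> [[Hsym Hr] HPD HDP Hsplit Htw] Htw2; elim=> [|n IH] U Hn HUD HU0 HDU.
  by move: Hn HDU; rewrite leqn0 cards_eq0 setD_eq0 => ->.
case: (pickP [pred w | (w \in P) && (nbhd e w :&: U != set0) && ~~ (nbhd e w \subset U)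
                     && ~~ (D :\: U \subset nbhd e w)]).
  move=> w /= /andP [/andP [/andP [wP Hw1] Hw2] Hw3].
  have HU'D : U :|: nbhd e w \subset D by rewrite subUset HUD HPD.
  have Hn' : #|D :\: (U :|: nbhd e w)| <= n.
    have : #|D :\: (U :|: nbhd e w)| < #|D :\: U|; last by move: Hn; clear; lia.
    apply: proper_card; apply/properP; split; first by rewrite setDUr subsetIl.
    move/subsetPn: Hw2 => [x xN xU]; exists x; first by rewrite inE xU (subsetP (HPD w wP)).
    by rewrite in_setD in_setU xN orbT.
  have HU0' : U :|: nbhd e w != set0.
    by apply: contraNneq HU0 => /eqP; rewrite -subset0 subUset => /andP [? _]; rewrite -subset0.
  have HDU' : ~~ (D \subset U :|: nbhd e w).
    move/subsetPn: Hw3 => [x xDU xN]; apply/subsetPn; exists x; first by move: xDU; rewrite inE => /andP [].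
    by move: xDU; rewrite in_setD in_setU => /andP [/negPf -> _]; rewrite (negPf xN).
  have [t [Hl Ht Hc Hcard]] := IH _ Hn' HU'D HU0' HDU'.
  exists (w :: t); split => /=.
  - by rewrite Hw2 Hl.
  - by move=> x; rewrite inE => /orP [/eqP ->|/Ht].
  - by rewrite big_cons setUA.
  - have := card_step Hr Hw1; rewrite mulnS.
    move: (k.-1 * size t) (uphalf k) Hcard => m h Hc1 H; lia.
move=> Hnone.
have [w wP /andP [Hw1 Hw2]] := Hsplit U HUD HU0 HDU.
have Hw3 : D :\: U \subset nbhd e w.
  by have := Hnone w; rewrite /= wP Hw1 Hw2 /= => /negbFE.
have [u uN] : exists u, u \in nbhd e w :&: U by apply/set0Pn.
have Hrk : #|D :\: U| < k.
  rewrite -(Hr w); apply: proper_card; apply/properP; split => //.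
  by exists u; [move: uN; rewrite inE => /andP [] | rewrite inE; move: uN; rewrite !inE => /andP [_ ->]].
move/subsetPn: HDU => [y yD yU].
have yR : y \in D :\: U by rewrite inE yU.
have Hsub : forall y1 y2, y1 \in D :\: U -> y2 \in D :\: U -> nbhd e y1 \subset nbhd e y2.
  move=> y1 y2 H1 H2; apply/subsetP => z; rewrite inE => ez.
  have zP : z \in P by apply: (HDP y1); [move: H1; rewrite inE => /andP [] | rewrite Hsym].
  have y1Nz : y1 \in nbhd e z by rewrite inE Hsym.
  have Hz1 : nbhd e z :&: U != set0.
    apply/negP => /eqP H0.
    have : nbhd e z \subset D :\: U.
      apply/subsetP => x xz; rewrite inE (subsetP (HPD z zP) x xz) andbT.
      apply/negP => xU; have : x \in nbhd e z :&: U by rewrite inE xz xU.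
      by rewrite H0 inE.
    move/subset_leq_card; rewrite Hr; move: Hrk; clear; lia.
  have Hz2 : ~~ (nbhd e z \subset U).
    apply/subsetPn; exists y1 => //; by move: H1; rewrite inE => /andP [].
  have : D :\: U \subset nbhd e z by have := Hnone z; rewrite /= zP Hz1 Hz2 /= => /negbFE.
  by move/subsetP => /(_ y2 H2); rewrite inE Hsym inE.
have Htwin : D :\: U \subset twins e y.
  apply/subsetP => y2 H2; rewrite inE eqEcard Hsub //= !Hr //.
have Hr2 := Htw2 y yD.
have Hcard := subset_leq_card Htwin.
exists [:: w]; split => /=.
- by rewrite Hw2.
- by move=> x; rewrite inE => /eqP ->.
- rewrite big_cons big_nil setU0; apply/subsetP => x xD.
  case: (boolP (x \in U)) => xU; first by rewrite inE xU.
  by rewrite inE (subsetP Hw3) ?orbT // inE xU.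
- have := cardsID U D; rewrite (setIidPr HUD).
  have [q [b [Hk Hb Hh]]] := uphalf_facts k; rewrite Hh muln1.
  move: Hcard Hr2 Hk Hb; clear; lia.
Qed.


Lemma nbhd_ne (T : finType) (e : rel T) k v : regular e k -> 0 < k -> nbhd e v != set0.
Proof. by move=> Hr Hk; rewrite -card_gt0 Hr. Qed.

Lemma process (T : finType) (e : rel T) k (P D : {set T}) :
  setting e k P D -> 3 <= k -> D != set0 ->
  exists s, [/\ legal_aux e set0 s, {subset s <= P},
     D \subset \bigcup_(x <- s) nbhd e x & #|D| + uphalf k + size s <= k * size s + 2].
Proof.
move=> Hset Hk3 HD0; have Hset' := Hset.
move: Hset' => [[Hsym Hr] HPD HDP Hsplit Htw].
have Hk0 : 0 < k by move: Hk3; clear; lia.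
have [q [b [Hk Hb Hh]]] := uphalf_facts k.
case: (pickP [pred y | (y \in D) && (k < 2 * #|twins e y|)]).
  move=> y /= /andP [yD Hy].
  have [v1 v1W] := set0Pn _ (nbhd_ne y Hr Hk0).
  have v1P : v1 \in P by apply: (HDP y); rewrite // Hsym; move: v1W; rewrite inE.
  have HWt : ~~ (nbhd e y \subset twins e v1).
    apply/negP => /subset_leq_card; rewrite Hr; have := Htw v1; move: Hk0; clear; lia.
  have [v2 v2W v2t] := subsetPn HWt.
  have v2P : v2 \in P by apply: (HDP y); rewrite // Hsym; move: v2W; rewrite inE.
  have Hne : ~~ (nbhd e v2 \subset nbhd e v1).
    apply/negP => Hs; move: v2t; rewrite inE eqEcard Hs !Hr leqnn.
    by [].
  have Hcap : twins e y \subset nbhd e v1 :&: nbhd e v2.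
    apply/subsetP => x; rewrite inE => /eqP Hx.
    rewrite inE !inE !(Hsym _ x).
    move: v1W v2W; rewrite -Hx !inE => -> ->; by [].
  set U := nbhd e v1 :|: nbhd e v2.
  have HUD : U \subset D by rewrite subUset !HPD.
  have HU0 : U != set0.
    apply: contraNneq (nbhd_ne v1 Hr Hk0) => /eqP.
    by rewrite -subset0 subUset => /andP [? _]; rewrite -subset0.
  have [t [Hl Ht Hc Hcard]] := G1 Hset (leqnn _) HUD HU0.
  exists [:: v1, v2 & t]; split => /=.
  - by rewrite set0U Hl Hne andbT /= andbT subset0; exact: nbhd_ne.
  - by move=> x; rewrite !inE => /orP [/eqP ->|/orP [/eqP ->|/Ht]].
  - by rewrite !big_cons setUA.
  - have H2 := cardsUI (nbhd e v1) (nbhd e v2); rewrite !Hr -/U in H2.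
    have H3 := subset_leq_card Hcap.
    have Hm : k.-1 * size t + size t = k * size t by rewrite addnC -mulSn prednK.
    rewrite Hh !mulnS; move: (k.-1 * size t) (k * size t) Hm Hcard H2 H3 Hy Hk Hb Hk0.
    clear; move=> m1 m2 *; lia.
move=> Hnone.
have Htw2 : forall y, y \in D -> 2 * #|twins e y| <= k.
  by move=> y yD; have := Hnone y; rewrite /= yD /= => /negbT; rewrite -leqNgt.
have [d dD] := set0Pn _ HD0.
have [v1 v1d] := set0Pn _ (nbhd_ne d Hr Hk0).
have v1P : v1 \in P by apply: (HDP d); rewrite // Hsym; move: v1d; rewrite inE.
have HDU : ~~ (D \subset nbhd e v1).
  apply/negP => HDN.
  have HPt : P \subset twins e v1.
    apply/subsetP => p pP; rewrite inE eqEcard (subset_trans (HPD p pP) HDN) !Hr leqnn.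
    by [].
  have HdP : nbhd e d \subset P.
    by apply/subsetP => w; rewrite inE => edw; apply: (HDP d); rewrite // Hsym.
  have := subset_leq_card (subset_trans HdP HPt); rewrite Hr; have := Htw v1.
  by move: Hk0; clear; lia.
have [t [Hl Ht Hc Hcard]] := G2 Hset Htw2 (leqnn _) (HPD v1 v1P) (nbhd_ne v1 Hr Hk0) HDU.
exists (v1 :: t); split => /=.
- by rewrite set0U Hl andbT subset0; exact: nbhd_ne.
- by move=> x; rewrite !inE => /orP [/eqP ->|/Ht].
- by rewrite !big_cons.
- have Hm : k.-1 * size t + size t = k * size t by rewrite addnC -mulSn prednK.
  rewrite Hr in Hcard; rewrite !mulnS; move: (k.-1 * size t) (k * size t) Hm Hcard Hk0.
  clear; move=> m1 m2 *; lia.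
Qed.


Lemma twin_bound (T : finType) (e : rel T) k :
  simple_graph e -> connected e -> regular e k -> 0 < k ->
  ~ isomorphic e (@Kkk_rel k) -> forall v, #|twins e v| < k.
Proof.
move=> [Hsym Hirr] Hcon Hr Hk0 Hiso v; rewrite ltnNge; apply/negP => Hge.
set W := twins e v; set M := nbhd e v.
have HwN : forall w, w \in W -> nbhd e w = M by move=> w; rewrite inE => /eqP.
have HWm : forall m, m \in M -> W \subset nbhd e m.
  move=> m mM; apply/subsetP => w wW; rewrite inE Hsym.
  by move: mM; rewrite -(HwN w wW) inE.
have HmN : forall m, m \in M -> nbhd e m = W.
  move=> m mM; apply/esym/eqP; rewrite eqEcard HWm //= Hr //.
have [m0 m0M] := set0Pn _ (nbhd_ne v Hr Hk0).
have HWk : #|W| = k by rewrite -(HmN m0 m0M) Hr.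
have HMk : #|M| = k by rewrite Hr.
have Hdisj : forall x, x \in W -> x \in M -> False.
  move=> x xW xM; move: xM; rewrite -(HwN x xW) inE Hirr //.
have HvW : v \in W by rewrite inE.
have Hall : forall x, x \in M :|: W.
  move=> x.
  have Hcl : closed e (M :|: W).
    move=> a b eab; rewrite !in_setU.
    have H1 : forall a b, e a b -> (a \in M) || (a \in W) -> (b \in M) || (b \in W).
      move=> a' b' eab'.
      have Hb : b' \in nbhd e a' by rewrite inE.
      move=> /orP [aM|aW].
        by move: Hb; rewrite (HmN a' aM) => ->; rewrite orbT.
      by move: Hb; rewrite (HwN a' aW) => ->.
    apply/idP/idP; first exact: H1.
    by apply: H1; rewrite Hsym.
  by rewrite -(closed_connect Hcl (Hcon v x)) in_setU HvW orbT.
have cW : k = #|W| by rewrite HWk.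
have cM : k = #|M| by rewrite HMk.
pose gW (i : 'I_k) : T := enum_val (cast_ord cW i).
pose gM (i : 'I_k) : T := enum_val (cast_ord cM i).
have gWP : forall i, gW i \in W by move=> i; exact: enum_valP.
have gMP : forall i, gM i \in M by move=> i; exact: enum_valP.
pose g (x : 'I_k + 'I_k) : T := match x with inl i => gW i | inr i => gM i end.
have ginj : injective g.
  move=> [i|i] [j|j] /= H.
  - by congr inl; apply: (cast_ord_inj (eq_n:=cW)); apply: enum_val_inj.
  - by case: (Hdisj (gW i)); rewrite // H.
  - by case: (Hdisj (gW j)); rewrite // -H.
  - by congr inr; apply: (cast_ord_inj (eq_n:=cM)); apply: enum_val_inj.
have gbij : bijective g.
  apply: inj_card_bij => //.
  rewrite card_sum card_ord.
  have -> : #|T| = #|M :|: W|.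
    by rewrite -cardsT; apply: eq_card => x; rewrite in_setT Hall.
  by rewrite (leq_trans (leq_card_setU _ _)) // HMk HWk.
have [g' gK g'K] := gbij.
apply: Hiso; exists g'; split; first by exists g.
move=> x y; rewrite -{2}(g'K x) -{2}(g'K y).
case: (g' x) => i; case: (g' y) => j /=.
- apply/esym/negP => H; apply: (Hdisj (gW j)) => //.
  by rewrite -(HwN (gW i) (gWP i)) inE.
- by move: (gMP j); rewrite -(HwN _ (gWP i)) inE => ->.
- by move: (gMP i); rewrite Hsym -(HwN _ (gWP j)) inE => ->.
- apply/esym/negP => H; apply: (Hdisj (gM j)) => //.
  by rewrite -(HmN (gM i) (gMP i)) inE.
Qed.


Lemma ratbound (n c m k d : nat) : (n + c + m <= k * m + d)%N -> (1 < k)%N ->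
  ((n%:Q + c%:Q - d%:Q) / (k%:Q - 1) <= m%:Q)%R.
Proof.
move=> H Hk.
have Hk' : (1 < k%:Q)%R by rewrite ltr1n.
rewrite ler_pdivrMr; last by rewrite subr_gt0.
have : ((n + c + m)%:R <= (k * m + d)%:R :> rat)%R by rewrite ler_nat.
rewrite !natrD natrM => H'.
lra.
Qed.


Lemma nonbip_split (T : finType) (e : rel T) :
  symmetric e -> connected e -> ~ bipartite e ->
  forall U : {set T}, U != set0 -> ~~ (setT \subset U) ->
  exists2 w, w \in setT & (nbhd e w :&: U != set0) && ~~ (nbhd e w \subset U).
Proof.
move=> Hsym Hcon Hbip U HU0 HTU.
case: (pickP [pred w | (nbhd e w :&: U != set0) && ~~ (nbhd e w \subset U)]).
  by move=> w /= Hw; exists w; rewrite ?in_setT.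
move=> Hnone; exfalso.
have [Q HQ] : {Q : {set T} | forall w, (w \in Q) = (nbhd e w \subset U)}.
  by exists [set w | nbhd e w \subset U] => w; rewrite inE.
have key : forall x y, e x y -> (y \in U) = (x \in Q).
  move=> x y exy; rewrite HQ.
  have yN : y \in nbhd e x by rewrite inE.
  case: (boolP (nbhd e x \subset U)) => HxU; first by rewrite (subsetP HxU).
  have := Hnone x; rewrite /= HxU andbT => /negbFE /eqP H0.
  apply/negP => yU; have : y \in nbhd e x :&: U by rewrite inE yN yU.
  by rewrite H0 inE.
set h := [set x | (x \in U) (+) (x \in Q)].
have Hcl : closed e h.
  move=> x y exy; rewrite !inE (key _ _ exy) -(key _ _ (_ : e y x)); last by rewrite Hsym.
  by rewrite addbC.
have [u uU] := set0Pn _ HU0.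
have [u' _ u'U] := subsetPn HTU.
have Hconst : forall x, (x \in h) = (u \in h) by move=> x; rewrite (closed_connect Hcl (Hcon u x)).
case: (boolP (u \in h)) => Hu.
  apply: Hbip; exists U => x y exy.
  have eyx : e y x by rewrite Hsym.
  have := Hconst x; have := Hconst y; rewrite Hu !inE (key _ _ exy) (key _ _ eyx).
  by case: (y \in Q); case: (x \in Q).
have HU : closed e U.
  move=> x y exy; have := Hconst x; rewrite (negPf Hu) inE (key _ _ (_ : e y x)); last by rewrite Hsym.
  by rewrite (key _ _ exy); case: (y \in Q); case: (x \in Q).
by move: (closed_connect HU (Hcon u u')); rewrite uU (negPf u'U).
Qed.

Lemma bip_split (T : finType) (e : rel T) (A : {set T}) :
  symmetric e -> connected e -> (forall x y, e x y -> (x \in A) != (y \in A)) ->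
  forall U : {set T}, U \subset ~: A -> U != set0 -> ~~ (~: A \subset U) ->
  exists2 w, w \in A & (nbhd e w :&: U != set0) && ~~ (nbhd e w \subset U).
Proof.
move=> Hsym Hcon HA U HUA HU0 HTU.
case: (pickP [pred w | (w \in A) && (nbhd e w :&: U != set0) && ~~ (nbhd e w \subset U)]).
  by move=> w /= /andP [/andP [wA H1] H2]; exists w; rewrite // H1 H2.
move=> Hnone; exfalso.
set g := [set x | if x \in A then nbhd e x :&: U != set0 else x \in U].
have H1 : forall x y, e x y -> x \in A -> (x \in g) = (y \in g).
  move=> x y exy xA.
  have yA : y \notin A by have := HA x y exy; rewrite xA.
  rewrite !inE xA (negPf yA).
  have yN : y \in nbhd e x by rewrite inE.
  case: (boolP (y \in U)) => yU.
    by apply/set0Pn; exists y; rewrite inE yN yU.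
  apply/negbTE/negP => Hne; have := Hnone x; rewrite /= xA Hne /= => /negbFE /subsetP /(_ y yN).
  by rewrite (negPf yU).
have Hcl : closed e g.
  move=> x y exy; case: (boolP (x \in A)) => xA; first exact: H1.
  have yA : y \in A by have := HA x y exy; rewrite (negPf xA); case: (y \in A).
  by rewrite (H1 y x) // Hsym.
have [u uU] := set0Pn _ HU0.
have [u' u'A u'U] := subsetPn HTU.
have uA : u \notin A by move: (subsetP HUA u uU); rewrite inE.
have := closed_connect Hcl (Hcon u u').
rewrite !inE (negPf uA) uU.
by move: u'A; rewrite inE => /negPf ->; rewrite (negPf u'U).
Qed.

Lemma cover_sub (T : finType) (e : rel T) (s : seq T) (P D : {set T}) :
  {subset s <= P} -> (forall p, p \in P -> nbhd e p \subset D) ->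
  \bigcup_(x <- s) nbhd e x \subset D.
Proof.
elim: s => [|x s IH] Hs HPD; first by rewrite big_nil sub0set.
rewrite big_cons subUset HPD ?Hs ?mem_head // IH // => y ys.
by apply: Hs; rewrite inE ys orbT.
Qed.

Lemma tds_of (T : finType) (e : rel T) (s : seq T) :
  symmetric e -> (0 < #|T|)%N -> legal_aux e set0 s ->
  setT \subset \bigcup_(x <- s) nbhd e x -> total_dominating_seq e s.
Proof.
move=> Hsym HT Hl Hc.
have Htd : total_dominating e (mem s).
  apply/forallP => v; apply/existsP.
  have [x xs exv] := bigcup_seq_mem (subsetP Hc v (in_setT v)).
  by exists x; rewrite xs Hsym.
rewrite /total_dominating_seq Htd andbT /legal_seq.
have /andP [_ Hu] := legal_aux_uniq Hl.
rewrite Hu /=; case: s Hl Hc {Hu Htd} => [|x s'] /=.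
  move=> _; rewrite big_nil => /subsetP H.
  by have [v _] := card_gt0P HT; have := H v (in_setT v); rewrite inE.
by rewrite set0U => /andP [].
Qed.

Lemma main_aux (T : finType) (e : rel T) (k : nat) :
  simple_graph e -> (0 < #|T|)%N -> (3 <= k)%N ->
  connected e -> regular e k -> ~ isomorphic e (@Kkk_rel k) ->
  (~ bipartite e ->
     ((#|T|%:Q + (uphalf k)%:Q - 2) / (k%:Q - 1) <= (gamma_gr_t e)%:Q)%R) /\
  (bipartite e ->
     ((#|T|%:Q + 2 * (uphalf k)%:Q - 4) / (k%:Q - 1) <= (gamma_gr_t e)%:Q)%R).
Proof.
move=> Hsimp HT Hk3 Hcon Hr Hiso.
have Hk0 : (0 < k)%N by move: Hk3; clear; lia.
have Hk1 : (1 < k)%N by move: Hk3; clear; lia.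
have Htw := twin_bound Hsimp Hcon Hr Hk0 Hiso.
have [Hsym Hirr] := Hsimp.
split.
  move=> Hbip.
  have Hset : setting e k setT setT.
    split.
    - by [].
    - by move=> p _; exact: subsetT.
    - by move=> d w _ _; exact: in_setT.
    - by move=> U _ HU0 HTU; exact: nonbip_split.
    - exact: Htw.
  have HD0 : [set: T] != set0 by rewrite -card_gt0 cardsT.
  have [s [Hl Hs Hc Hcard]] := process Hset Hk3 HD0.
  have Hg := gamma_ge (tds_of Hsym HT Hl Hc).
  rewrite cardsT in Hcard.
  apply: (le_trans (ratbound Hcard Hk1)).
  by rewrite ler_nat.
move=> [A HA].
have HA' : forall x y, e x y -> (x \in ~: A) != (y \in ~: A).
  by move=> x y exy; rewrite !inE; have := HA x y exy; case: (x \in A); case: (y \in A).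
have mkset : forall B : {set T}, (forall x y, e x y -> (x \in B) != (y \in B)) -> setting e k B (~: B).
  move=> B HB; split; [by [] | | | | exact: Htw].
  - move=> p pB; apply/subsetP => x; rewrite inE => epx.
    by have := HB p x epx; rewrite pB inE; case: (x \in B).
  - move=> d w; rewrite inE => dB ewd.
    by have := HB w d ewd; rewrite (negPf dB); case: (w \in B).
  - by move=> U HUB HU0 HBU; exact: bip_split.
have Hset1 := mkset A HA.
have Hset2 := mkset _ HA'; rewrite setCK in Hset2.
have [x0 _] := card_gt0P HT.
have [y0 y0N] := set0Pn _ (nbhd_ne x0 Hr Hk0).
have Hxy : (x0 \in A) != (y0 \in A) by apply: HA; move: y0N; rewrite inE.
have HD1 : ~: A != set0.
  apply/set0Pn; case: (boolP (x0 \in A)) => x0A; last by exists x0; rewrite inE.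
  by exists y0; move: Hxy; rewrite x0A inE; case: (y0 \in A).
have HD2 : A != set0.
  apply/set0Pn; case: (boolP (x0 \in A)) => x0A; first by exists x0.
  by exists y0; move: Hxy; rewrite (negPf x0A); case: (y0 \in A).
have [s1 [Hl1 Hs1 Hc1 Hcard1]] := process Hset1 Hk3 HD1.
have [s2 [Hl2 Hs2 Hc2 Hcard2]] := process Hset2 Hk3 HD2.
have Hsub1 : \bigcup_(x <- s1) nbhd e x \subset ~: A.
  by apply: cover_sub Hs1 _; case: Hset1.
have HPD2 : forall p, p \in ~: A -> nbhd e p \subset A by case: Hset2.
have Hl : legal_aux e set0 (s1 ++ s2).
  rewrite legal_aux_cat Hl1 /= set0U.
  rewrite (legal_aux_irr (D := A) (U2 := set0)) //.
  - by move=> x xs2; apply: HPD2; apply: Hs2.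
  - rewrite set0I; apply/eqP; rewrite -subset0; apply/subsetP => x.
    by rewrite inE => /andP [/(subsetP Hsub1)]; rewrite inE => /negPf ->.
have Hc : setT \subset \bigcup_(x <- s1 ++ s2) nbhd e x.
  rewrite big_cat; apply/subsetP => x _; rewrite in_setU.
  case: (boolP (x \in A)) => xA; first by rewrite (subsetP Hc2) ?orbT.
  by rewrite (subsetP Hc1) // inE.
have Hg := gamma_ge (tds_of Hsym HT Hl Hc).
have HTc : #|A| + #|~: A| = #|T| by rewrite cardsC.
have Hcard : (#|T| + (2 * uphalf k) + size (s1 ++ s2) <= k * size (s1 ++ s2) + 4)%N.
  rewrite size_cat mulnDr; move: Hcard1 Hcard2 HTc; move: (k * size s1) (k * size s2) => a b.
  clear; lia.
apply: (le_trans (_ : _ <= (size (s1 ++ s2))%:Q)%R); last by rewrite ler_nat.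
have := ratbound Hcard Hk1; rewrite PoszM intrM; exact.
Qed.

Local Open Scope ring_scope.

Theorem mainTheorem13 (T : finType) (e : rel T) (k : nat) :
  simple_graph e -> (0 < #|T|)%N -> (3 <= k)%N ->
  connected e -> regular e k -> ~ isomorphic e (@Kkk_rel k) ->
  (~ bipartite e ->
     ((#|T|%:Q + (uphalf k)%:Q - 2) / (k%:Q - 1) <= (gamma_gr_t e)%:Q)) /\
  (bipartite e ->
     ((#|T|%:Q + 2 * (uphalf k)%:Q - 4) / (k%:Q - 1) <= (gamma_gr_t e)%:Q)).
Proof. exact: main_aux. Qed.
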